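(* Let $p$ be a prime number and let $f(t)\in\mathbb{Z}[t]$ be monic. Suppose $f(t)\equiv\Phi_m(t)\bmod p$ for some $m\in\mathbb{Z}_{>0}$ with $p\nmid m$. Then $\lim_{n\to\infty}\mathrm{Res}(t^{p^n}-1,f(t))=\Phi_m(1)$ in $\mathbb{Z}_p$; for $m\ge2$ this equals $l$ if $m=l^e$ for a prime number $l$ and some $e\in\mathbb{Z}_{>0}$, and equals $1$ otherwise.
   Context: $\Phi_m(t)$ denotes the $m$-th cyclotomic polynomial. For $n\in\mathbb{Z}_{>0}$, $\mathrm{Res}(t^n-1,f(t))=\prod_{\zeta^n=1}f(\zeta)$, the product over all $n$-th roots of unity. *)

(* Defs.v *)
From mathcomp Require Import all_boot all_order all_algebra all_field.
Set Implicit Arguments. Unset Strict Implicit. Unset Printing Implicit Defensive.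
Import Order.TTheory GRing.Theory Num.Theory.
Local Open Scope ring_scope.

(* Res(t^N - 1, f) = prod over N-th roots of unity of f(zeta), computed in
   algC as \prod_(k < N) f(z^k) for a primitive N-th root of unity z. *)
Definition res_unity (N : nat) (z : algC) (f : {poly int}) : algC :=
  \prod_(k < N) (map_poly (intr : int -> algC) f).[z ^+ k].

(* p-adic convergence of a sequence of (a priori algebraic) numbers to an
   integer L in Z_p:  for every k, eventually a n - L lies in p^k Z. *)
Definition padic_cvg (p : nat) (a : nat -> algC) (L : int) : Prop :=
  forall k : nat, exists N : nat, forall n : nat, (N <= n)%N ->
    exists c : int, a n - L%:~R = ((p ^ k)%N)%:R * c%:~R.

(* Main.v *)
Require Import Defs.
From mathcomp Require Import all_boot all_order all_algebra all_field.
From mathcomp Require Import ring.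
Set Implicit Arguments. Unset Strict Implicit. Unset Printing Implicit Defensive.
Import Order.TTheory GRing.Theory Num.Theory.
Local Open Scope ring_scope.

Definition sc (c : algC) (A : {poly algC}) := A \Po (c *: 'X).

Lemma coef_sc c A i : (sc c A)`_i = c ^+ i * A`_i.
Proof.
rewrite /sc comp_polyE coef_sum.
under eq_bigr do rewrite exprZn scalerA coefZ coefXn.
have [lt|ge] := ltnP i (size A).
  rewrite (bigD1 (Ordinal lt)); last by [].
  rewrite big1; last first.
    move=> j /eqP ne; rewrite (_ : (i == j) = false); first by rewrite mulr0.
    by apply/negbTE/eqP => E; apply: ne; apply: val_inj; rewrite /= E.
  rewrite Monoid.mulm1 (_ : nat_of_ord (Ordinal lt) = i); last by []. 
  by rewrite eqxx mulr1 mulrC.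
rewrite nth_default; last by [].
rewrite mulr0 big1; first by [].
move=> j _; rewrite (_ : (i == j) = false); first by rewrite mulr0.
by apply/negbTE; rewrite neq_ltn (leq_trans (ltn_ord j) ge) orbT.
Qed.

Lemma horner_sc c A x : (sc c A).[x] = A.[c * x].
Proof. by rewrite /sc horner_comp hornerZ hornerX. Qed.

Lemma scD c A B : sc c (A + B) = sc c A + sc c B.
Proof. exact: comp_polyD. Qed.

Lemma scZ c e A : sc c (e *: A) = e *: sc c A.
Proof. exact: comp_polyZ. Qed.

Lemma scM c A B : sc c (A * B) = sc c A * sc c B.
Proof. exact: comp_polyM. Qed.

Lemma sc_prod c I (r : seq I) (P : pred I) (F : I -> {poly algC}) :
  sc c (\prod_(i <- r | P i) F i) = \prod_(i <- r | P i) sc c (F i).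
Proof.
apply: (big_morph (sc c)); first by move=> A B; apply: scM.
by rewrite /sc comp_polyC.
Qed.

Lemma sc_sc c d A : sc c (sc d A) = sc (d * c) A.
Proof. by apply/polyP => i; rewrite !coef_sc mulrA -exprMn (mulrC c d). Qed.

Lemma polyOver_sc c A : c \in Aint -> A \is a polyOver Aint -> sc c A \is a polyOver Aint.
Proof.
move=> Hc /polyOverP HA; apply/polyOverP => i; rewrite coef_sc.
by apply: rpredM; [apply: rpredX | apply: HA].
Qed.

Lemma alg_id (R : comPzRingType) (X T Z E a b : R) :
  (X + E*T + E^+2*Z)*(a + E*b) = X*a + E*(T*a + b*X) + E^+2*(Z*a + T*b + E*(Z*b)).
Proof. ring. Qed.

Lemma expand2 (e : algC) (x y : nat -> {poly algC}) n :
  e \in Aint -> (forall b, x b \is a polyOver Aint) -> (forall b, y b \is a polyOver Aint) ->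
  exists2 z, z \is a polyOver Aint &
  \prod_(0 <= b < n) (x b + e *: y b) =
    \prod_(0 <= b < n) x b + e *: \sum_(0 <= b < n) (y b * \prod_(0 <= b' < n | b' != b) x b')
    + (e ^+ 2) *: z.
Proof.
move=> He Hx Hy; elim: n => [|n [Z HZ IH]].
  exists 0; first by apply: rpred0.
  by rewrite !big_geq // !scaler0 !addr0.
set T := \sum_(0 <= b < n) (y b * \prod_(0 <= b' < n | b' != b) x b').
have HT : T \is a polyOver Aint.
  apply: rpred_sum => b _; apply: rpredM; first exact: Hy.
  by apply: rpred_prod => b' _; apply: Hx.
have HX : \prod_(0 <= b < n) x b \is a polyOver Aint by apply: rpred_prod => b _; apply: Hx.
have ET : \sum_(0 <= b < n.+1) (y b * \prod_(0 <= b' < n.+1 | b' != b) x b')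
   = T * x n + y n * \prod_(0 <= b < n) x b.
  rewrite big_nat_recr //=; congr (_ + _).
    rewrite /T big_distrl /=; apply: eq_big_nat => b /andP[_ lbn].
    rewrite -mulrA; congr (_ * _).
    rewrite big_mkcond big_nat_recr //= (_ : (n != b) = true); last by rewrite neq_ltn lbn orbT.
    by rewrite -big_mkcond.
  congr (_ * _); rewrite big_mkcond big_nat_recr //= eqxx mulr1.
  apply: eq_big_nat => b /andP[_ lbn]; rewrite (_ : (b != n) = true) //.
  by rewrite neq_ltn lbn.
exists (Z * x n + T * y n + e%:P * (Z * y n)).
  apply: rpredD; first apply: rpredD; apply: rpredM => //; try apply: Hx; try apply: Hy.
  by rewrite polyOverC.
  by apply: rpredM => //; apply: Hy.
rewrite big_nat_recr //= IH -/T big_nat_recr //= ET.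
rewrite -!mul_polyC rmorphXn; apply: alg_id.
Qed.

Section Graeffe.
Variable p : nat.
Hypothesis p_gt0 : (0 < p)%N.
Variable w : algC.
Hypothesis wp : p.-primitive_root w.

Definition Pi A := \prod_(0 <= b < p) sc (w ^+ b) A.

Lemma Pi_inv A : sc w (Pi A) = Pi A.
Proof.
rewrite /Pi sc_prod.
under eq_bigr do rewrite sc_sc -exprSr.
case: p p_gt0 wp => [//|p'] _ wp'.
rewrite big_nat_recr // big_nat_recl // (prim_expr_order wp') expr0 mulrC.
by [].
Qed.

Lemma Pi_coef A i : ~~ (p %| i)%N -> (Pi A)`_i = 0.
Proof.
move=> ndv; have E := congr1 (fun P : {poly algC} => P`_i) (Pi_inv A).
rewrite /= coef_sc in E.
have : (w ^+ i - 1) * (Pi A)`_i = 0 by rewrite mulrBl mul1r E subrr.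
move/eqP; rewrite mulf_eq0 => /orP[|/eqP //].
by rewrite subr_eq0 -(prim_order_dvd wp) (negbTE ndv).
Qed.

Definition gr (B : {poly algC}) := \poly_(i < size B) B`_(p * i).

Lemma coef_gr B i : (gr B)`_i = B`_(p * i).
Proof.
rewrite coef_poly; case: ifP => // /negbT; rewrite -leqNgt => le.
by rewrite nth_default // (leq_trans le) // leq_pmull.
Qed.

Lemma Pi_gr A : Pi A = gr (Pi A) \Po 'X^p.
Proof.
apply/polyP => i; rewrite coef_comp_poly_Xn //.
case: ifP => [dv | /negbT ndv]; last by rewrite Pi_coef.
by rewrite coef_gr mulnC divnK.
Qed.

Lemma horner_gr A x : (gr (Pi A)).[x ^+ p] = \prod_(0 <= b < p) A.[w ^+ b * x].
Proof.
rewrite -hornerXn -horner_comp -Pi_gr /Pi horner_prod.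
by apply: eq_bigr => b _; rewrite horner_sc.
Qed.

Lemma gr_lin B C e : gr (B + e *: C) = gr B + e *: gr C.
Proof. by apply/polyP => i; rewrite coefD coefZ !coef_gr coefD coefZ. Qed.

Lemma polyOver_gr B : B \is a polyOver Aint -> gr B \is a polyOver Aint.
Proof. by move=> /polyOverP HB; apply/polyOverP => i; rewrite coef_gr. Qed.

Lemma sum_wpow i : \sum_(0 <= b < p) (w ^+ i) ^+ b = if (p %| i)%N then p%:R else 0.
Proof.
case: ifP => [dv | /negbT ndv].
  move: dv; rewrite (prim_order_dvd wp) => /eqP ->.
  under eq_bigr do rewrite expr1n.
  by rewrite sumr_const_nat subn0.
have ne1 : w ^+ i - 1 != 0 by rewrite subr_eq0 -(prim_order_dvd wp).
apply/eqP; rewrite -(mulrI_eq0 _ (mulfI ne1)) big_mkord -subrX1.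
by rewrite exprAC (prim_expr_order wp) expr1n subrr.
Qed.

Lemma orbit_sum T : T \is a polyOver Aint ->
  exists2 W, W \is a polyOver Aint &
    \sum_(0 <= b < p) sc (w ^+ b) T = p%:R *: W.
Proof.
move=> /polyOverP HT.
exists (\poly_(i < size T) (if (p %| i)%N then T`_i else 0)).
  apply/polyOverP => i; rewrite coef_poly; case: ifP => _; last by apply: rpred0.
  by case: ifP => _; [apply: HT | apply: rpred0].
apply/polyP => i; rewrite coef_sum coefZ coef_poly.
under eq_bigr do rewrite coef_sc exprAC.
rewrite -mulr_suml sum_wpow.
case dv: (p %| i)%N; case lt: (i < size T)%N; rewrite ?mul0r ?mulr0 //.
by rewrite nth_default ?mulr0 // leqNgt lt.
Qed.

Lemma reindex_prod (F : nat -> {poly algC}) b : (b < p)%N ->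
  (forall k, F k = F (k %% p)%N) ->
  \prod_(0 <= b' < p | b' != 0%N) F (b + b')%N = \prod_(0 <= b' < p | b' != b) F b'.
Proof.
move=> lbp HF; rewrite !big_mkord.
pose h (j : 'I_p) : 'I_p := Ordinal (ltn_pmod (b + j) p_gt0).
have hinj : injective h.
  move=> j1 j2 /(congr1 val) /= /eqP; rewrite eqn_modDl !modn_small // => /eqP E.
  exact: val_inj.
rewrite [RHS](reindex_inj hinj); apply: eq_big => j.
  rewrite /= -{2}(modn_small lbp) -{2}[b]addn0 eqn_modDl mod0n modn_small //.
by rewrite /= -HF.
Qed.

Lemma Pi_cong A H j : A \is a polyOver Aint -> H \is a polyOver Aint -> (0 < j)%N ->
  exists2 W, W \is a polyOver Aint &
    Pi (A + (p ^ j)%:R *: H) = Pi A + (p ^ j.+1)%:R *: W.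
Proof.
move=> HA HH j_gt0.
have wA : w \in Aint by apply: Aint_prim_root wp.
have wbA b : w ^+ b \in Aint by apply: rpredX.
set e : algC := (p ^ j)%:R.
have eA : e \in Aint by apply: rpred_nat.
have [Z HZ EZ] := @expand2 e (fun b => sc (w ^+ b) A) (fun b => sc (w ^+ b) H) p eA
   (fun b => polyOver_sc (wbA b) HA) (fun b => polyOver_sc (wbA b) HH).
set T0 := H * \prod_(0 <= b' < p | b' != 0%N) sc (w ^+ b') A.
have HT0 : T0 \is a polyOver Aint.
  apply: rpredM => //; apply: rpred_prod => b' _; exact: polyOver_sc.
have [W0 HW0 EW0] := orbit_sum HT0.
exists (W0 + (p ^ j.-1)%:R *: Z).
  by apply: rpredD => //; apply: polyOverZ => //; apply: rpred_nat.
have ES : \sum_(0 <= b < p) (sc (w ^+ b) H * \prod_(0 <= b' < p | b' != b) sc (w ^+ b') A)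
    = \sum_(0 <= b < p) sc (w ^+ b) T0.
  apply: eq_big_nat => b /andP[_ lbp].
  rewrite /T0 scM sc_prod; congr (_ * _); symmetry.
  under eq_bigr do rewrite sc_sc -exprD addnC.
  apply: (reindex_prod (F := fun k => sc (w ^+ k) A)) => // k.
  by rewrite (prim_expr_mod wp).
rewrite /Pi.
under eq_bigr do rewrite scD scZ.
rewrite EZ ES EW0 scalerA scalerDr scalerA -addrA; congr (_ + _).
rewrite /e.
have -> : (p ^ j)%:R * p%:R = (p ^ j.+1)%:R :> algC by rewrite expnSr natrM.
congr (_ + _); congr (_ *: _).
rewrite -natrX -!natrM -expnM -expnD.
case: j j_gt0 {e eA EZ} => // j0 _.
by congr ((p ^ _)%:R); rewrite muln2 -addnn addSn addnS.
Qed.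

End Graeffe.

Lemma prod_split (R : comPzRingType) (F : nat -> R) c K :
  \prod_(0 <= k < c * K) F k = \prod_(0 <= i < c) \prod_(0 <= a < K) F (i * K + a)%N.
Proof.
elim: c => [|c IH]; first by rewrite mul0n !big_geq.
rewrite mulSnr big_nat_recr //= -IH (@big_cat_nat _ _ _ (c * K)%N) ?leq_addr //=.
congr (_ * _); rewrite -{1}[(c * K)%N]add0n big_addn addKn.
by apply: eq_bigr => a _; rewrite addnC.
Qed.

Definition bprod N (z : algC) (P : {poly algC}) := \prod_(k < N) P.[z ^+ k].

Lemma decomp p n z B : (0 < p)%N -> (p ^ n.+1).-primitive_root z ->
  bprod (p ^ n.+1) z B = bprod (p ^ n) (z ^+ p) (gr p (Pi p (z ^+ (p ^ n)) B)).
Proof.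
move=> p_gt0 zp.
have wp : p.-primitive_root (z ^+ (p ^ n)).
  have dv : (p %| p ^ n.+1)%N by rewrite expnS dvdn_mulr.
  have := dvdn_prim_root zp dv.
  by rewrite expnS mulKn.
rewrite /bprod.
under [RHS]eq_bigr do rewrite -exprM mulnC exprM horner_gr //.
rewrite -(big_mkord xpredT (fun k => B.[z ^+ k])) expnS prod_split exchange_big_nat /=.
rewrite -(big_mkord xpredT (fun a => \prod_(0 <= b < p) B.[(z ^+ (p ^ n)) ^+ b * z ^+ a])).
apply: eq_bigr => a _; apply: eq_bigr => b _.
by rewrite exprD -exprM mulnC.
Qed.

Lemma main_cong p n : (0 < p)%N -> forall (z : algC) A H j,
  (p ^ n).-primitive_root z -> A \is a polyOver Aint -> H \is a polyOver Aint -> (0 < j)%N ->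
  exists2 c, c \in Aint &
    bprod (p ^ n) z (A + (p ^ j)%:R *: H) = bprod (p ^ n) z A + (p ^ (j + n))%:R * c.
Proof.
move=> p_gt0; elim: n => [|n IH] z A H j zp HA HH j_gt0.
  exists H.[1]; first by apply: rpred_horner => //; apply: rpred1.
  by rewrite /bprod expn0 !big_ord1 expr0 hornerD hornerZ addn0.
have wp : p.-primitive_root (z ^+ (p ^ n)).
  have dv : (p %| p ^ n.+1)%N by rewrite expnS dvdn_mulr.
  have := dvdn_prim_root zp dv.
  by rewrite expnS mulKn.
have zpp : (p ^ n).-primitive_root (z ^+ p).
  have dv : (p ^ n %| p ^ n.+1)%N by rewrite expnS dvdn_mull.
  have := dvdn_prim_root zp dv.
  by rewrite expnS mulnK // expn_gt0 p_gt0.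
have [W HW EW] := Pi_cong p_gt0 wp HA HH j_gt0.
rewrite !decomp // EW gr_lin.
have HPA : Pi p (z ^+ (p ^ n)) A \is a polyOver Aint.
  apply: rpred_prod => b _; apply: polyOver_sc => //.
  by apply: rpredX; apply: Aint_prim_root wp.
have [c Hc Ec] := IH (z ^+ p) (gr p (Pi p (z ^+ (p ^ n)) A)) (gr p W) j.+1 zpp
  (polyOver_gr p_gt0 HPA) (polyOver_gr p_gt0 HW) (ltn0Sn j).
exists c; first by [].
by rewrite Ec addSnnS.
exact: p_gt0.
Qed.

Lemma bprod_int N z (f : {poly int}) : (0 < N)%N -> N.-primitive_root z ->
  exists a : int, bprod N z (map_poly (intr : int -> algC) f) = a%:~R.
Proof.
move=> N_gt0 zp.
set F := map_poly (intr : int -> algC) f.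
have sF : size F = size f by apply: size_map_inj_poly; [apply: intr_inj | apply: rmorph0].
pose o (i : 'I_N) (l : nat) : 'I_N := Ordinal (ltn_pmod (i + l) N_gt0).
pose C : 'M[int]_N := \matrix_(i, j) \sum_(l < size f | o i l == j) f`_l.
pose V : 'M[algC]_N := \matrix_(i, k) (z ^+ k) ^+ i.
pose d : 'rV[algC]_N := \row_k F.[z ^+ k].
have EV : map_mx intr C *m V = V *m diag_mx d.
  apply/matrixP => i k; rewrite mul_mx_diag !mxE.
  under eq_bigr do rewrite !mxE rmorph_sum mulr_suml big_mkcond.
  rewrite exchange_big.
  under eq_bigr => l _.
    rewrite (eq_bigr (fun j => if j == o i l then intr f`_l * (z ^+ k) ^+ (o i l) else 0)).
      rewrite -big_mkcond big_pred1_eq.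
    over.
    move=> j _; rewrite eq_sym; case: eqP => [-> | _]; by [].
  have zkN : (z ^+ k) ^+ N = 1 by rewrite exprAC (prim_expr_order zp) expr1n.
  under eq_bigr do rewrite /= (expr_mod _ zkN) exprD mulrCA.
  rewrite -mulr_sumr (horner_coef_wide _ (eq_leq sF)).
  congr (_ * _); apply: eq_bigr => l _.
  by rewrite /F coef_map.
have detV : \det V != 0.
  have -> : V = Vandermonde N (\row_k z ^+ k) by apply/matrixP => i k; rewrite !mxE.
  rewrite det_Vandermonde; apply/prodf_neq0 => i _; apply/prodf_neq0 => j ltij.
  rewrite !mxE subr_eq0 (eq_prim_root_expr zp) !modn_small //.
  by rewrite neq_ltn ltij orbT.
have := congr1 determinant EV; rewrite !det_mulmx det_diag det_map_mx [RHS]mulrC.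
move=> /(mulIf detV) E.
exists (\det C); rewrite /bprod E.
by apply: eq_bigr => k _; rewrite mxE.
Qed.

Lemma totient_even m : odd m -> (2 < m)%N -> ~~ odd (totient m).
Proof.
move=> om m_gt2.
have m_gt1 : (1 < m)%N by apply: ltnW.
have m_gt0 : (0 < m)%N by apply: ltnW.
have qp := pdiv_prime m_gt1; have qm := pdiv_dvd m.
have oq : odd (pdiv m).
  case: (even_prime qp) => [q2|//]; move: om.
  by rewrite -(divnK qm) oddM q2 andbF.
rewrite totientE // (bigD1_seq (pdiv m)) ?primes_uniq ?mem_primes ?qp ?m_gt0 ?qm //=.
rewrite oddM negb_and oddM negb_and; apply/orP; left; apply/orP; left.
by move: oq; case: (pdiv m).
Qed.

Lemma reindex_coprime m e (w : algC) (G : algC -> algC) : (0 < m)%N ->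
  m.-primitive_root w -> coprime e m ->
  \prod_(i < m | coprime i m) G (w ^+ (i * e)) = \prod_(i < m | coprime i m) G (w ^+ i).
Proof.
move=> m_gt0 wp co_e_m.
pose f (k : 'I_m) := Ordinal (ltn_pmod (k * e) m_gt0).
have injf: injective f.
  apply: (can_inj (g := fun k : 'I_m => Ordinal (ltn_pmod (k * (egcdn e m).1) m_gt0))) => k.
  apply: val_inj => /=.
  rewrite modnMml -mulnA -modnMmr -{1}(mul1n e).
  by rewrite (chinese_modr co_e_m 0) modnMmr muln1 modn_small.
rewrite [RHS](reindex_inj injf); apply: eq_big => k /=.
  by rewrite coprime_modl coprimeMl co_e_m andbT.
by rewrite (prim_expr_mod wp).
Qed.

Lemma bprod_Phi p n z m : prime p -> (0 < m)%N -> ~~ (p %| m)%N ->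
  (p ^ n).-primitive_root z ->
  bprod (p ^ n) z (map_poly (intr : int -> algC) 'Phi_m) = (('Phi_m).[1])%:~R.
Proof.
move=> pp m_gt0 npm zp.
have [w wp] := C_prim_root_exists m_gt0.
have E1 := horner_map (intr : {rmorphism int -> algC}) 'Phi_m 1.
rewrite rmorph1 in E1; rewrite -E1 (Cintr_Cyclotomic wp) /bprod /cyclotomic.
under eq_bigr do rewrite horner_prod.
rewrite exchange_big horner_prod.
set N := (p ^ n)%N.
have coN : coprime N m by rewrite coprimeXl // prime_coprime.
have E2 (i : 'I_m) : \prod_(k < N) ('X - (w ^+ i)%:P).[z ^+ k] = (-1) ^+ N * ((-1) * (1 - w ^+ (i * N)))%R.
  under eq_bigr do rewrite hornerXsubC -opprB.
  rewrite prodrN card_ord; congr (_ * _).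
  have := congr1 (fun P : {poly algC} => P.[w ^+ i]) (factor_Xn_sub_1 zp).
  rewrite horner_prod big_mkord hornerD hornerN hornerXn hornerC.
  rewrite (eq_bigr (fun k : 'I_N => w ^+ i - z ^+ k)); last by move=> k _; rewrite hornerXsubC.
  move=> ->.
  by rewrite -exprM mulN1r opprB.
under eq_bigr do rewrite E2.
rewrite (reindex_coprime (fun y => (-1) ^+ N * ((-1) * (1 - y)))) //.
under [RHS]eq_bigr do rewrite hornerXsubC.
rewrite big_split /= big_split /=.
have K (c : algC) : \prod_(i < m | coprime i m) c = c ^+ totient m.
  rewrite -[c in LHS]expr1 prodrXr; congr (_ ^+ _).
  rewrite totient_count_coprime big_mkord big_mkcond [RHS]big_mkcond.
  by apply: eq_bigr => i _; rewrite coprime_sym; case: (coprime i m).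
rewrite !K mulrA -exprMn -exprSr -exprM -signr_odd oddM /=.
have [oN | eN] := boolP (odd N); first by rewrite andFb expr0 mul1r.
have p2 : p = 2%N.
  case: (even_prime pp) => // op; move: eN; rewrite /N oddX op orbT.
  by [].
have om : odd m by move: npm; rewrite p2 dvdn2 negbK.
have [m1 | m_ne1] := eqVneq m 1%N.
  rewrite (_ : \prod_(i < m | coprime i m) (1 - w ^+ i) = 0) ?mulr0 //.
  move: wp; rewrite m1 => wp1.
  by rewrite big_mkcond big_ord1 /= expr0 subrr.
have m_gt2 : (2 < m)%N.
  case: m m_gt0 m_ne1 om {npm wp coN E2 K E1} => [|[|[|m']]] //.
by rewrite (negbTE (totient_even om m_gt2)) andbF expr0 mul1r.
Qed.

Lemma Phi1_poly : 'Phi_1 = 'X - 1.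
Proof.
have := prod_Cyclotomic (ltn0Sn 0).
by rewrite (_ : divisors 1 = [:: 1%N]) // big_seq1 expr1.
Qed.

Lemma prod_Phi1 m : (0 < m)%N ->
  \prod_(d <- divisors m | (1 < d)%N) ('Phi_d).[1] = m%:R :> int.
Proof.
move=> m_gt0; have E := prod_Cyclotomic m_gt0.
rewrite (bigD1_seq 1%N) ?divisor1 ?divisors_uniq // Phi1_poly subrX1 in E.
have nz : ('X - 1 : {poly int}) != 0 by rewrite -polyC1 polyXsubC_eq0.
have {}E := mulfI nz E.
have := congr1 (fun P : {poly int} => P.[1]) E.
rewrite horner_prod horner_sum /=.
under [in X in _ = X -> _]eq_bigr do rewrite hornerXn expr1n.
rewrite sumr_const card_ord => <-.
rewrite big_seq_cond [RHS]big_seq_cond; apply: eq_bigl => d.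
case dm: (d \in divisors m) => //=.
have d_gt0 : (0 < d)%N by apply: (dvdn_gt0 m_gt0); rewrite dvdn_divisors // dm.
by case: d d_gt0 {dm} => [|[|d]].
Qed.

Section Lambda.
Local Open Scope nat_scope.

Definition Lam d := if (1 < d) && (d == pdiv d ^ logn (pdiv d) d) then pdiv d else 1.

Lemma Lam_gt0 d : 0 < Lam d.
Proof. by rewrite /Lam; case: ifP => // _; apply: pdiv_gt0. Qed.

Lemma pp_pdiv q d : prime q -> 1 < d -> d = q ^ logn q d -> pdiv d = q.
Proof.
move=> qp d1 Ed; move: d1; rewrite Ed.
by case: (logn q d) => [|k] //; rewrite pdiv_pfactor.
Qed.

Lemma logn_Lam q d : prime q -> logn q (Lam d) = ((1 < d) && (d == q ^ logn q d)).
Proof.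
move=> qp; rewrite /Lam; case: ifP => [/andP[d1 /eqP Ed] | Hc].
  rewrite (logn_prime _ (pdiv_prime d1)) d1 /=.
  have [Eq|Neq] := eqVneq q (pdiv d).
    by rewrite Eq -Ed eqxx.
  case: eqP => [Ed2|//].
  by move: Neq; rewrite (pp_pdiv qp d1 Ed2) eqxx.
rewrite logn1; case: andP => [[d1 /eqP Ed2]|//].
by move: Hc; rewrite d1 (pp_pdiv qp d1 Ed2) -Ed2 eqxx.
Qed.

Lemma logn_prod q (I : Type) (r : seq I) (P : pred I) (F : I -> nat) :
  (forall i, 0 < F i) ->
  logn q (\prod_(i <- r | P i) F i) = \sum_(i <- r | P i) logn q (F i).
Proof.
move=> HF; elim: r => [|x r IH]; first by rewrite !big_nil logn1.
rewrite !big_cons; case: (P x) => //.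
by rewrite lognM ?IH // prodn_gt0.
Qed.

Lemma inner_count q m d : prime q -> 0 < m -> d \in divisors m ->
  \sum_(1 <= k < m) (d == q ^ k) = ((1 < d) && (d == q ^ logn q d)).
Proof.
move=> qp m_gt0 dm.
have q1 := prime_gt1 qp.
have dlem : d <= m by apply: dvdn_leq => //; rewrite dvdn_divisors.
case: andP => [[d1 /eqP Ed] | Hc].
  rewrite (eq_bigr (fun k => (k == logn q d) : nat)); last first.
    by move=> k _; rewrite {1}Ed eqn_exp2l // eq_sym.
  rewrite (eq_bigr (fun k => if k == logn q d then 1 else 0)); last by move=> k _; case: eqP.
  rewrite -big_mkcond /= big_nat1_eq.
  have l1 : 0 < logn q d.
    by rewrite lt0n; apply/eqP => E0; move: d1; rewrite Ed E0.
  have lm : logn q d < m.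
    by apply: leq_trans (ltn_expl _ q1) _; rewrite -Ed.
  by rewrite l1 lm.
rewrite big1_seq // => k /andP[_ /[!mem_index_iota] /andP[k1 km]].
case: eqP => // Ed; exfalso; apply: Hc; split.
  by rewrite Ed; apply: leq_trans (ltn_expl _ q1).
by rewrite Ed pfactorK.
Qed.

Lemma prod_Lam m : 0 < m -> \prod_(d <- divisors m | 1 < d) Lam d = m.
Proof.
move=> m_gt0; apply: eqn_from_log; [exact: (prodn_gt0 Lam_gt0) | exact: m_gt0 | move=> q]. case qp: (prime q); last first.
  have L0 n : logn q n = 0 by rewrite lognE qp.
  by rewrite !L0.
rewrite logn_prod; last exact: Lam_gt0.
rewrite (logn_count_dvd _ qp).
under eq_bigr do rewrite logn_Lam //.
have E k : (q ^ k %| m) = \sum_(d <- divisors m) (d == q ^ k) :> nat.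
  rewrite dvdn_divisors // -(count_uniq_mem _ (divisors_uniq m)) -sum1_count big_mkcond.
  by apply: eq_bigr => d _; rewrite /=; case: (d == q ^ k).
under [RHS]eq_bigr do rewrite E.
rewrite exchange_big /= big_mkcond big_seq [RHS]big_seq; apply: eq_bigr => d dm.
rewrite inner_count //; by case: (1 < d).
Qed.

End Lambda.

Lemma Phi1_Lam m : (1 < m)%N -> ('Phi_m).[1] = (Lam m)%:R :> int.
Proof.
elim/ltn_ind: m => m IH m1.
have m_gt0 : (0 < m)%N by apply: ltnW.
have mdiv : m \in divisors m by apply: divisors_id.
have E1 := prod_Phi1 m_gt0; have E2 := prod_Lam m_gt0.
rewrite big_mkcond (bigD1_seq m) ?divisors_uniq //= m1 in E1.
rewrite big_mkcond (bigD1_seq m) ?divisors_uniq //= m1 in E2.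
set R2 := (\prod_(i <- divisors m | i != m) (if (1 < i)%N then Lam i else 1%N))%N in E2.
have R2_gt0 : (0 < R2)%N.
  by apply: prodn_gt0 => i; case: ifP => _ //; apply: Lam_gt0.
have ER : \prod_(i <- divisors m | i != m) (if (1 < i)%N then ('Phi_i).[1] else 1) = R2%:R :> int.
  rewrite /R2 natr_prod big_seq_cond [RHS]big_seq_cond; apply: eq_bigr => i /andP[im ne].
  case: ifP => i1; last by [].
  apply: IH => //; rewrite ltn_neqAle ne /=; apply: dvdn_leq => //.
  by rewrite dvdn_divisors.
rewrite ER in E1.
have nz : (R2%:R : int) != 0 by rewrite pnatr_eq0 -lt0n.
apply: (mulIf nz); rewrite E1 -natrM E2.
by [].
Qed.


Theorem corollary4p10 (p : nat) (f : {poly int}) (m : nat) :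
  prime p -> f \is monic -> (0 < m)%N -> ~~ (p %| m)%N ->
  (forall i : nat, (p%:Z %| f`_i - ('Phi_m)`_i)%Z) ->
  (forall z : nat -> algC, (forall n, (p ^ n)%N.-primitive_root (z n)) ->
     padic_cvg p (fun n => res_unity (p ^ n) (z n) f) ('Phi_m).[1])
  /\ ((2 <= m)%N ->
      forall l e : nat, prime l -> (0 < e)%N -> m = (l ^ e)%N ->
        ('Phi_m).[1] = l%:Z)
  /\ ((2 <= m)%N ->
      ~ (exists l e : nat, [/\ prime l, (0 < e)%N & m = (l ^ e)%N]) ->
        ('Phi_m).[1] = 1).
Proof.
move=> pp fmon m_gt0 npm Hcong.
have p_gt0 := prime_gt0 pp.
split; [|split].
- move=> z zp k; exists k => n kn.
  set G : {poly int} := \poly_(i < size (f - 'Phi_m)) (((f - 'Phi_m)`_i) %/ p%:Z)%Z.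
  have Ef : f = 'Phi_m + p%:Z *: G.
    apply/polyP => i; rewrite coefD coefZ coef_poly.
    case: ifP => lt.
      rewrite mulrC divzK; first by rewrite coefB addrC subrK.
      by rewrite coefB; apply: Hcong.
    have : (f - 'Phi_m)`_i = 0 by rewrite nth_default // leqNgt lt.
    by rewrite coefB mulr0 addr0 => /eqP; rewrite subr_eq0 => /eqP.
  have HG : map_poly (intr : int -> algC) G \is a polyOver Aint.
    by apply/polyOverP => i; rewrite coef_map /=; apply: Aint_int.
  have HP : map_poly (intr : int -> algC) 'Phi_m \is a polyOver Aint.
    by apply/polyOverP => i; rewrite coef_map /=; apply: Aint_int.
  have EF : map_poly (intr : int -> algC) f =
     map_poly (intr : int -> algC) 'Phi_m + (p ^ 1)%:R *: map_poly (intr : int -> algC) G.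
    by rewrite {1}Ef rmorphD /= map_polyZ expn1.
  have [c Hc Ec] := main_cong p_gt0 (zp n) HP HG (ltn0Sn 0).
  rewrite -EF (bprod_Phi pp m_gt0 npm (zp n)) in Ec.
  have pn_gt0 : (0 < p ^ n)%N by rewrite expn_gt0 p_gt0.
  have [a Ea] := bprod_int f pn_gt0 (zp n).
  have -> : res_unity (p ^ n) (z n) f = a%:~R by rewrite /res_unity -Ea.
  set x : algC := (p ^ (1 + n - k))%:R * c.
  have Ex : a%:~R - (('Phi_m).[1])%:~R = (p ^ k)%:R * x :> algC.
    rewrite -Ea Ec addrC addKr /x mulrA -natrM -expnD subnKC //.
    by apply: leq_trans kn _; rewrite add1n.
  have xA : x \in Aint by apply: rpredM => //; apply: rpred_nat.
  have pk0 : (p ^ k)%:R != 0 :> algC by rewrite pnatr_eq0 -lt0n expn_gt0 p_gt0.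
  have xQ : x \in Crat.
    have -> : x = (a%:~R - (('Phi_m).[1])%:~R) / (p ^ k)%:R.
      by rewrite Ex [_ * x]mulrC mulfK.
    by apply: rpred_div; [apply: rpredB; apply: rpred_int | apply: rpred_nat].
  have /intrP [c0 Ec0] := Cint_rat_Aint xQ xA.
  by exists c0; rewrite Ex Ec0.
- move=> m2 l e lp e_gt0 Em.
  rewrite Phi1_Lam // -natz; congr (_ %:R).
  rewrite /Lam Em; case: e e_gt0 {Em} => [//|e] _.
  rewrite pdiv_pfactor // pfactorK // eqxx andbT.
  by rewrite (ltn_exp2l 0) // prime_gt1.
- move=> m2 nex.
  rewrite Phi1_Lam // /Lam; case: ifP => // /andP[_ /eqP E].
  exfalso; apply: nex; exists (pdiv m), (logn (pdiv m) m); split => //.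
    exact: pdiv_prime.
  by rewrite lt0n; apply/eqP => E0; move: m2; rewrite E E0.
Qed.
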